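(* For every state $x\in\mathcal X$ and every dataset $\mathbb D_N$, the GP-CBF-SOCP at $x$, $$\min_{u\in\mathbb R^m}\ \|u-u_{\text{ref}}(x)\|_2^2\quad\text{s.t.}\quad L_{\tilde f}B(x)+L_{\tilde g}B(x)u+\mu_B(x,u|\mathbb D_N)-\beta\,\sigma_B(x,u|\mathbb D_N)+\gamma(B(x))\ge 0,$$ is a convex optimization problem. Specifically, it is a second-order cone program: it has the same minimizer(s) $u$ as a problem with a linear objective subject to second-order cone constraints.
   Context: Consider the control-affine system $\dot x=f(x)+g(x)u$ with state $x\in\mathcal X\subset\mathbb R^n$ and input $u\in\mathbb R^m$. Here $f:\mathcal X\to\mathbb R^n$ and $g:\mathcal X\to\mathbb R^{n\times m}$ are locally Lipschitz and unknown. A nominal model $\tilde f:\mathcal X\to\mathbb R^n$, $\tilde g:\mathcal X\to\mathbb R^{n\times m}$ is available. Let $B:\mathcal X\to\mathbb R$ be continuously differentiable, let $\gamma$ be an extended class-$\mathcal K_\infty$ function, and let $u_{\text{ref}}:\mathcal X\to\mathbb R^m$ be a reference controller. Lie derivatives: $L_{\tilde f}B(x)=\nabla B(x)\tilde f(x)\in\mathbb R$ and $L_{\tilde g}B(x)=\nabla B(x)\tilde g(x)\in\mathbb R^{1\times m}$; $L_fB$ and $L_gB$ are defined in the same way. Set $\Delta_B(x,u)=(L_fB-L_{\tilde f}B)(x)+(L_gB-L_{\tilde g}B)(x)u$. A dataset $\mathbb D_N=\{((x_j,u_j),z_j)\}_{j=1}^N$ consists of noisy measurements $z_j=\Delta_B(x_j,u_j)+\epsilon_j$.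 GP model (affine dot product kernel): - Kernels $k_1,\dots,k_{m+1}:\mathcal X\times\mathcal X\to\mathbb R$ are given, and $k_c((x,y),(x',y'))=y^T\mathrm{diag}(k_1(x,x'),\dots,k_{m+1}(x,x'))y'$ for $y,y'\in\mathbb R^{m+1}$. - Let $y_j=[1,u_j^T]^T$, $\mathbf z=(z_1,\dots,z_N)^T$, let $\sigma_n>0$ be the noise parameter, and let $K_c\in\mathbb R^{N\times N}$ have entries $k_c((x_i,y_i),(x_j,y_j))$. - Let $K_{**}(x)=\mathrm{diag}(k_1(x,x),\dots,k_{m+1}(x,x))$, and let $K_{*Y}(x)\in\mathbb R^{(m+1)\times N}$ have $(i,j)$ entry $k_i(x,x_j)(y_j)_i$. - Define $m_B(x|\mathbb D_N)=K_{*Y}(K_c+\sigma_n^2I)^{-1}\mathbf z\in\mathbb R^{m+1}$ and $\Sigma_B(x|\mathbb D_N)=K_{**}-K_{*Y}(K_c+\sigma_n^2I)^{-1}K_{*Y}^T$. The matrix $\Sigma_B(x|\mathbb D_N)$ is positive definite. - The GP posterior mean and standard deviation of $\Delta_B$ are $\mu_B(x,u|\mathbb D_N)=m_B(x|\mathbb D_N)^T[1;u]$ and $\sigma_B(x,u|\mathbb D_N)=\sqrt{[1,u^T]\Sigma_B(x|\mathbb D_N)[1;u]}$. $\beta>0$ is a given constant. *)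

(* Defs.v *)
From HB Require Import structures.
From mathcomp Require Import all_boot all_order all_algebra.
From mathcomp Require Import all_classical all_reals all_analysis.
Set Implicit Arguments. Unset Strict Implicit. Unset Printing Implicit Defensive.
Import Order.TTheory GRing.Theory Num.Theory.
Import numFieldNormedType.Exports.
Local Open Scope classical_set_scope.
Local Open Scope ring_scope.

Section Defs.
Variable R : realType.

Definition norm2 (p : nat) (v : 'cV[R]_p) : R := Num.sqrt (\sum_i (v i 0) ^+ 2).

Definition sc (M : 'M[R]_1) : R := M 0 0.

Definition ext_classKinf (g : R -> R) : Prop :=
  continuous g /\ (forall a b : R, a < b -> g a < g b) /\ g 0 = 0 /\
  (g x @[x --> +oo] --> +oo) /\ (g x @[x --> -oo] --> -oo).

Definition is_kernel (n : nat) (k : 'cV[R]_n -> 'cV[R]_n -> R) : Prop :=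
  (forall x y, k x y = k y x) /\
  (forall (p : nat) (pts : 'I_p -> 'cV[R]_n) (c : 'cV[R]_p),
     0 <= sc (c^T *m (\matrix_(i, j) k (pts i) (pts j)) *m c)).

Definition posdef (p : nat) (S : 'M[R]_p) : Prop :=
  S^T = S /\ forall v : 'cV[R]_p, v != 0 -> 0 < sc (v^T *m S *m v).

Definition ext1 (m : nat) (u : 'cV[R]_m) : 'cV[R]_(1 + m) := col_mx 1%:M u.

Definition LieF (n : nat) (B : 'cV[R]_n -> R) (ft : 'cV[R]_n -> 'cV[R]_n)
  (x : 'cV[R]_n) : R := 'd B x (ft x).
Definition LieG (n m : nat) (B : 'cV[R]_n -> R) (gt : 'cV[R]_n -> 'M[R]_(n, m))
  (x : 'cV[R]_n) : 'rV[R]_m := \row_i 'd B x (col i (gt x)).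

(* GP model with the affine dot product kernel *)
Section GP.
Variables (n m N : nat) (k : 'I_(1 + m) -> 'cV[R]_n -> 'cV[R]_n -> R)
  (xs : 'I_N -> 'cV[R]_n) (us : 'I_N -> 'cV[R]_m) (z : 'cV[R]_N) (sn : R).

Definition ys (j : 'I_N) : 'cV[R]_(1 + m) := ext1 (us j).
Definition Kc : 'M[R]_N :=
  \matrix_(i, j) \sum_l (ys i l 0) * k l (xs i) (xs j) * (ys j l 0).
Definition Kss (x : 'cV[R]_n) : 'M[R]_(1 + m) := diag_mx (\row_l k l x x).
Definition KsY (x : 'cV[R]_n) : 'M[R]_(1 + m, N) :=
  \matrix_(l, j) (k l x (xs j) * ys j l 0).
Definition Kinv : 'M[R]_N := invmx (Kc + (sn ^+ 2)%:M).
Definition mB (x : 'cV[R]_n) : 'cV[R]_(1 + m) := KsY x *m Kinv *m z.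
Definition SigmaB (x : 'cV[R]_n) : 'M[R]_(1 + m) :=
  Kss x - KsY x *m Kinv *m (KsY x)^T.
Definition muB (x : 'cV[R]_n) (u : 'cV[R]_m) : R := sc ((mB x)^T *m ext1 u).
Definition sigmaB (x : 'cV[R]_n) (u : 'cV[R]_m) : R :=
  Num.sqrt (sc ((ext1 u)^T *m SigmaB x *m ext1 u)).
End GP.

Definition is_minimizer (p : nat) (f : 'cV[R]_p -> R) (S : set 'cV[R]_p)
  (u : 'cV[R]_p) : Prop := S u /\ forall v, S v -> f u <= f v.

Record soc_con (p : nat) := SOC {
  soc_dim : nat;
  soc_A : 'M[R]_(soc_dim, p);
  soc_b : 'cV[R]_soc_dim;
  soc_c : 'cV[R]_p;
  soc_d : R }.

Definition soc_holds (p : nat) (C : soc_con p) (w : 'cV[R]_p) : Prop :=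
  norm2 (soc_A C *m w + soc_b C) <= sc ((soc_c C)^T *m w) + soc_d C.

Definition socp_feasible (p q : nat) (cs : 'I_q -> soc_con p) : set 'cV[R]_p :=
  [set w | forall i, soc_holds (cs i) w].
End Defs.

(* Main.v *)
Require Import Defs.
From HB Require Import structures.
From mathcomp Require Import all_boot all_order all_algebra.
From mathcomp Require Import all_classical all_reals all_analysis.
From mathcomp Require Import ring lra.
Import Order.TTheory GRing.Theory Num.Theory.
Import numFieldNormedType.Exports.
Local Open Scope classical_set_scope.
Local Open Scope ring_scope.

Set Implicit Arguments. Unset Strict Implicit. Unset Printing Implicit Defensive.
Section H.
Variable R : realType.

Lemma CS p (a b : 'I_p -> R) :
  (\sum_i a i * b i) ^+ 2 <= (\sum_i a i ^+ 2) * (\sum_i b i ^+ 2).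
Proof.
set A := \sum_i a i ^+ 2; set B := \sum_i b i ^+ 2; set C := \sum_i a i * b i.
have A0 : 0 <= A by apply: sumr_ge0 => i _; rewrite sqr_ge0.
have [Az|Ap] := eqVneq A 0.
  have ai : forall i, a i = 0.
    move=> i; apply/eqP; rewrite -sqrf_eq0; apply/eqP.
    by move/psumr_eq0P: Az => ->// j _; rewrite sqr_ge0.
  rewrite /C big1 ?expr0n ?mul0r ?Az ?mul0r// => i _; by rewrite ai mul0r.
have Ag : 0 < A by rewrite lt_def Ap A0.
have H : 0 <= \sum_i (A * b i - C * a i) ^+ 2.
  by apply: sumr_ge0 => i _; rewrite sqr_ge0.
have E : \sum_i (A * b i - C * a i) ^+ 2 = A * (A * B - C ^+ 2).
  under eq_bigr => i _ do rewrite sqrrB !exprMn.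
  rewrite big_split sumrB /= -!mulr_sumr.
  rewrite (_ : \sum_i (A * b i * (C * a i)) *+ 2 = (A * C * C) *+ 2).
    rewrite -/A -/B; ring.
  rewrite sumrMnl; congr (_ *+ 2); rewrite /C mulr_sumr; apply: eq_bigr => i _; ring.
rewrite -subr_ge0; move: H; rewrite E pmulr_rge0 //.
Qed.


Lemma norm2_ge0 p (y : 'cV[R]_p) : 0 <= norm2 y.
Proof. exact: sqrtr_ge0. Qed.

Lemma sumsq_ge0 p (y : 'cV[R]_p) : 0 <= \sum_i y i 0 ^+ 2.
Proof. by apply: sumr_ge0 => i _; rewrite sqr_ge0. Qed.

Lemma norm2_sq p (y : 'cV[R]_p) : norm2 y ^+ 2 = \sum_i y i 0 ^+ 2.
Proof. by rewrite /norm2 sqr_sqrtr // sumsq_ge0. Qed.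

Lemma le_norm2 p (y : 'cV[R]_p) s : 0 <= s -> \sum_i y i 0 ^+ 2 <= s ^+ 2 -> norm2 y <= s.
Proof. by move=> s0 h; rewrite -(ger0_norm s0) -sqrtr_sqr; apply: ler_wsqrtr. Qed.

Lemma sc_tr p (y : 'cV[R]_p) : sc (y^T *m y) = \sum_i y i 0 ^+ 2.
Proof. by rewrite /sc !mxE; apply: eq_bigr => i _; rewrite !mxE expr2. Qed.

Lemma norm2_conv p (y1 y2 : 'cV[R]_p) l : 0 <= l -> l <= 1 ->
  norm2 (l *: y1 + (1 - l) *: y2) <= l * norm2 y1 + (1 - l) * norm2 y2.
Proof.
move=> l0 l1; have n1 := norm2_ge0 y1; have n2 := norm2_ge0 y2.
apply: le_norm2; first by rewrite addr_ge0 // mulr_ge0 // subr_ge0.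
have -> : \sum_i (l *: y1 + (1 - l) *: y2) i 0 ^+ 2 =
   l ^+ 2 * (\sum_i y1 i 0 ^+ 2) + 2 * (l * (1 - l)) * (\sum_i y1 i 0 * y2 i 0)
   + (1 - l) ^+ 2 * (\sum_i y2 i 0 ^+ 2).
  rewrite !mulr_sumr -!big_split /=; apply: eq_bigr => i _; rewrite !mxE; ring.
have C := CS (fun i => y1 i 0) (fun i => y2 i 0).
rewrite -!norm2_sq.
have H : \sum_i y1 i 0 * y2 i 0 <= norm2 y1 * norm2 y2.
  apply: (le_trans (ler_norm _)); rewrite -sqrtr_sqr /norm2 -sqrtrM ?sumsq_ge0 //.
  exact: ler_wsqrtr C.
have H2 : 0 <= (l * (1 - l)) * (norm2 y1 * norm2 y2 - \sum_i y1 i 0 * y2 i 0).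
  by rewrite mulr_ge0 ?subr_ge0 // mulr_ge0 // subr_ge0.
move: H2; set c := \sum_i _ * _; set a := norm2 y1; set b := norm2 y2.
move=> H2; rewrite -subr_ge0; set d := (X in 0 <= X).
have -> : d = 2 * (l * (1 - l) * (a * b - c)) by rewrite /d; ring.
by rewrite mulr_ge0.
Qed.

Lemma norm2Z p (y : 'cV[R]_p) c : norm2 (c *: y) = `|c| * norm2 y.
Proof.
rewrite /norm2 -sqrtr_sqr -sqrtrM ?sqr_ge0 // mulr_sumr; congr Num.sqrt.
by apply: eq_bigr => i _; rewrite mxE exprMn.
Qed.


Lemma scD (A B : 'M[R]_1) : sc (A + B) = sc A + sc B.
Proof. by rewrite /sc mxE. Qed.
Lemma scZ (A : 'M[R]_1) k : sc (k *: A) = k * sc A.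
Proof. by rewrite /sc mxE. Qed.
Lemma scT (A : 'M[R]_1) : sc (A^T) = sc A.
Proof. by rewrite /sc mxE. Qed.

Lemma quad_block p (x : 'cV[R]_1) (y : 'cV[R]_p) (a : 'M[R]_1) (b : 'M[R]_(1, p))
  (d : 'M[R]_p) :
  sc ((col_mx x y)^T *m block_mx a b b^T d *m col_mx x y) =
  x 0 0 ^+ 2 * a 0 0 + 2 * (x 0 0 * sc (b *m y)) + sc (y^T *m d *m y).
Proof.
rewrite tr_col_mx mul_row_block mul_row_col.
rewrite [x]mx11_scalar tr_scalar_mx !mul_scalar_mx !mulmxDl -!scalemxAl.
rewrite -[y^T *m b^T]trmx_mul.
set X := x 0 0.
rewrite (_ : X%:M 0 0 = X); last by rewrite mxE.
rewrite !mul_mx_scalar !scD !scZ scT /sc; ring.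
Qed.

Lemma chol p (S : 'M[R]_p) : posdef S -> exists A : 'M[R]_p, S = A^T *m A.
Proof.
elim: p S => [|p IH] S [Ssym Spos].
  by exists 0; rewrite [S]flatmx0 [_ *m _]flatmx0.
pose S' : 'M[R]_(1 + p) := S.
pose a := ulsubmx S'; pose b := ursubmx S'; pose c := dlsubmx S'; pose d := drsubmx S'.
have hS : S' = block_mx a b c d by rewrite /a /b /c /d submxK.
have E : block_mx a^T c^T b^T d^T = block_mx a b c d.
  by rewrite -tr_block_mx -hS; exact: Ssym.
case: (eq_block_mx E) => _ _ cE dE.
rewrite -cE in hS.
have quad : forall (x : 'cV[R]_1) (y : 'cV[R]_p),
   sc ((col_mx x y)^T *m S' *m col_mx x y) =
   x 0 0 ^+ 2 * a 0 0 + 2 * (x 0 0 * sc (b *m y)) + sc (y^T *m d *m y).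
  by move=> x y; rewrite hS quad_block.
have apos : 0 < a 0 0.
  have := Spos (col_mx (1%:M : 'cV[R]_1) (0 : 'cV[R]_p) : 'cV[R]_p.+1).
  have -> : col_mx (1%:M : 'cV[R]_1) (0 : 'cV[R]_p) != 0.
    rewrite col_mx_eq0 negb_and; apply/orP; left.
    apply/eqP => /matrixP /(_ 0 0); rewrite !mxE /= => /eqP; by rewrite oner_eq0.
  move=> /(_ isT); rewrite (quad 1%:M 0).
  rewrite !mulmx0 /sc !mxE /=.
  by rewrite expr1n mul1r !mulr0 !addr0.
set al := a 0 0.
pose S2 := d - al^-1 *: (b^T *m b).
have [A2 hA2] : exists A2 : 'M[R]_p, S2 = A2^T *m A2.
  apply: IH; split.
    by rewrite /S2 linearB /= linearZ /= trmx_mul trmxK dE.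
  move=> v vn0.
  pose x : 'cV[R]_1 := (- (al^-1 * sc (b *m v)))%:M.
  have := Spos (col_mx x v : 'cV[R]_p.+1).
  have -> : col_mx x v != 0 by rewrite col_mx_eq0 negb_and vn0 orbT.
  move=> /(_ isT); rewrite quad -/al.
  rewrite /S2 mulmxBr mulmxBl -scalemxAr -scalemxAl scD.
  have -> : sc (- (al^-1 *: (v^T *m (b^T *m b) *m v))) = - (al^-1 * sc (b *m v) ^+ 2).
    rewrite mulmxA -(mulmxA _ b) -trmx_mul; set M := b *m v.
    by rewrite /sc !mxE big_ord1 !mxE expr2.
  rewrite /x mxE /= mulr1n.
  have alne : al != 0 by rewrite gt_eqF.
  set s := sc (b *m v); set q := sc (v^T *m d *m v).
  have -> : (- (al^-1 * s)) ^+ 2 * al + 2 * (- (al^-1 * s) * s) + q = q - al^-1 * s ^+2.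
    by field.
  done.
have r0 : 0 < Num.sqrt al by rewrite sqrtr_gt0.
have rne : Num.sqrt al != 0 by rewrite gt_eqF.
have rr : Num.sqrt al * Num.sqrt al = al by rewrite -expr2 sqr_sqrtr // ltW.
pose Ab : 'M[R]_(1 + p) := block_mx (Num.sqrt al)%:M ((Num.sqrt al)^-1 *: b) 0 A2.
suff key : S' = Ab^T *m Ab by exists Ab.
rewrite hS /Ab tr_block_mx mulmx_block; congr block_mx.
- by rewrite trmx0 mul0mx addr0 tr_scalar_mx -scalar_mxM rr [a]mx11_scalar.
- by rewrite trmx0 mul0mx addr0 tr_scalar_mx mul_scalar_mx scalerA mulfV // scale1r.
- rewrite mulmx0 addr0 mul_mx_scalar linearZ /= scalerA.
  by rewrite mulfV // scale1r.
- rewrite -hA2 /S2 linearZ /=.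
  rewrite linearZ /= -scalemxAl scalerA -invfM rr.
  by rewrite addrC subrK.
Qed.
End H.


Lemma convE (R : realType) m (t : {i01 R}) (u v : convex_lmodType 'cV[R]_m) :
  conv t u v = t%:num *: (u : 'cV[R]_m) + (1 - t%:num) *: (v : 'cV[R]_m).
Proof. by []. Qed.

Lemma convJ (R : realType) m (r : 'cV[R]_m) :
  convex_function [set: 'cV[R]_m] (fun u : 'cV[R]_m => sc ((u - r)^T *m (u - r))).
Proof.
move=> t u v _ _; rewrite convRE convE /unstable.onem !sc_tr.
set l := t%:num.
have l0 : 0 <= l := ge0 t.
have l1 : l <= 1 by rewrite /l le1.
rewrite !mulr_sumr -big_split /=; apply: ler_sum => i _.
rewrite !mxE.
set a := u i 0; set b := v i 0; set c := r i 0.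
have h : 0 <= l * (1 - l) * (a - b) ^+ 2.
  apply: mulr_ge0; last exact: sqr_ge0.
  apply: mulr_ge0; first exact: l0.
  by rewrite subr_ge0.
rewrite -subr_ge0; set d := (X in 0 <= X).
have -> : d = l * (1 - l) * (a - b) ^+ 2 by rewrite /d; ring.
done.
Qed.

Lemma mainthm (R : realType) (n m N : nat) (X : set 'cV[R]_n)
  (ft : 'cV[R]_n -> 'cV[R]_n) (gt : 'cV[R]_n -> 'M[R]_(n, m))
  (B : 'cV[R]_n -> R) (gam : R -> R) (uref : 'cV[R]_n -> 'cV[R]_m)
  (k : 'I_(1 + m) -> 'cV[R]_n -> 'cV[R]_n -> R) (sn beta : R) :
  (forall x, X x -> differentiable B x) ->
  (forall v, {within X, continuous (fun y => 'd B y v)}) ->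
  ext_classKinf gam ->
  (forall l, is_kernel (k l)) ->
  0 < sn -> 0 < beta ->
  forall (x : 'cV[R]_n), X x ->
  forall (xs : 'I_N -> 'cV[R]_n) (us : 'I_N -> 'cV[R]_m) (z : 'cV[R]_N),
  (forall j, X (xs j)) ->
  posdef (SigmaB k xs us sn x) ->
  let J := fun u : 'cV[R]_m => sc ((u - uref x)^T *m (u - uref x)) in
  let F := [set u : 'cV[R]_m | 0 <= LieF B ft x + sc (LieG B gt x *m u)
              + muB k xs us z sn x u - beta * sigmaB k xs us sn x u
              + gam (B x)] in
  convex_function [set: 'cV[R]_m] J /\ convex_set F /\
  exists (q : nat) (cs : 'I_q -> soc_con R (m + 1)) (c : 'cV[R]_(m + 1)),
    (forall (u : 'cV[R]_m) (t : 'cV[R]_1),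
       socp_feasible cs (col_mx u t) <-> F u /\ norm2 (u - uref x) <= sc t) /\
    (forall u : 'cV[R]_m, is_minimizer J F u <->
       exists t : 'cV[R]_1,
         is_minimizer (fun w => sc (c^T *m w)) (socp_feasible cs) (col_mx u t)).
Proof.
move=> dB dBc gK kK sn0 b0 x Xx xs us z Xxs Spd J F.
have [L HL] := chol Spd.
pose e0 : 'cV[R]_(1 + m) := col_mx 1%:M 0.
pose Em : 'M[R]_(1 + m, m) := col_mx 0 1%:M.
pose g := LieG B gt x + (mB k xs us z sn x)^T *m Em.
pose a0 := LieF B ft x + sc ((mB k xs us z sn x)^T *m e0) + gam (B x).
have ext1E : forall u, ext1 u = e0 + Em *m u.
  by move=> u; rewrite /ext1 /e0 /Em mul_col_mx mul0mx mul1mx add_col_mx addr0 add0r.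
have sigE : forall u, sigmaB k xs us sn x u = norm2 (L *m e0 + (L *m Em) *m u).
  move=> u; rewrite /sigmaB HL mulmxA -trmx_mul -mulmxA sc_tr /norm2.
  by rewrite ext1E mulmxDr mulmxA.
have FE : forall u, F u <-> beta * norm2 (L *m e0 + (L *m Em) *m u) <= a0 + sc (g *m u).
  move=> u; rewrite /F /= -sigE /muB ext1E mulmxDr !scD /g mulmxDl scD mulmxA /a0.
  split => h; lra.
split; first exact: convJ.
split.
  move=> u v t; rewrite !in_setE => /FE hu /FE hv; apply/FE.
  rewrite convE; set l := t%:num.
  have l0 : 0 <= l by rewrite /l ge0.
  have l1' : l <= 1 by rewrite /l le1.
  have l1 : 0 <= 1 - l by rewrite subr_ge0.
  have -> : L *m e0 + (L *m Em) *m (l *: (u : 'cV[R]_m) + (1 - l) *: (v : 'cV[R]_m)) =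
     l *: (L *m e0 + L *m Em *m u) + (1 - l) *: (L *m e0 + L *m Em *m v).
    rewrite mulmxDr -!scalemxAr !scalerDr addrACA -scalerDl (addrC l) subrK scale1r.
    by [].
  have Hn := norm2_conv (L *m e0 + L *m Em *m u) (L *m e0 + L *m Em *m v) l0 l1'.
  rewrite mulmxDr -!scalemxAr scD !scZ.
  have H1 := ler_wpM2l l0 hu.
  have H2 := ler_wpM2l l1 hv.
  have H3 := ler_wpM2l (ltW b0) Hn.
  lra.
pose P : 'M[R]_(m, m + 1) := row_mx 1%:M 0.
pose Q : 'M[R]_(1, m + 1) := row_mx 0 1%:M.
have PE : forall (u : 'cV[R]_m) (t : 'cV[R]_1), P *m col_mx u t = u.
  by move=> u t; rewrite /P mul_row_col mul1mx mul0mx addr0.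
have QE : forall (u : 'cV[R]_m) (t : 'cV[R]_1), Q *m col_mx u t = t.
  by move=> u t; rewrite /Q mul_row_col mul1mx mul0mx add0r.
pose C1 := SOC (beta *: (L *m Em *m P)) (beta *: (L *m e0)) ((g *m P)^T) a0.
pose C2 := SOC P (- uref x) Q^T 0.
pose cs := fun i : 'I_2 => if val i == 0%N then C1 else C2.
have C1E : forall (u : 'cV[R]_m) (t : 'cV[R]_1), soc_holds C1 (col_mx u t) <-> F u.
  move=> u t; rewrite FE /soc_holds /=.
  rewrite -scalemxAl -scalerDr norm2Z (ger0_norm (ltW b0)) trmxK -!mulmxA !PE [_ + a0]addrC [L *m (Em *m u) + _]addrC.
  by split.
have C2E : forall (u : 'cV[R]_m) (t : 'cV[R]_1), soc_holds C2 (col_mx u t) <-> norm2 (u - uref x) <= sc t.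
  by move=> u t; rewrite /soc_holds /= trmxK PE QE addr0.
have feasE : forall (u : 'cV[R]_m) (t : 'cV[R]_1), socp_feasible cs (col_mx u t) <-> F u /\ norm2 (u - uref x) <= sc t.
  move=> u t; split.
    move=> h; split; first by apply/(C1E u t); exact: (h (@Ordinal 2 0 isT)).
    by apply/(C2E u t); exact: (h (@Ordinal 2 1 isT)).
  move=> [h1 h2] [[|[|i]] hi] //=; rewrite /cs /=.
    exact/C1E.
  exact/C2E.
have obj : forall (u : 'cV[R]_m) (t : 'cV[R]_1), sc ((Q^T)^T *m col_mx u t) = sc t by move=> u t; rewrite trmxK QE.
have sct : forall r : R, sc (r%:M : 'M[R]_1) = r by move=> r; rewrite /sc mxE.
have Jn : forall v, J v = norm2 (v - uref x) ^+ 2 by move=> v; rewrite /J sc_tr norm2_sq.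
exists 2%N, cs, Q^T; split; first exact: feasE.
move=> u; split.
  move=> [Fu Jmin]; exists (norm2 (u - uref x))%:M; split.
    by apply/feasE; split => //; rewrite sct.
  move=> w; rewrite -[w]vsubmxK => /feasE [Fv hv]. rewrite !obj sct.
  apply: le_trans hv.
  have := Jmin _ Fv; rewrite !Jn => h.
  rewrite -(ger0_norm (norm2_ge0 (u - uref x))) -[X in _ <= X](ger0_norm (norm2_ge0 _)).
  by rewrite -!sqrtr_sqr; exact: ler_wsqrtr h.
move=> [t [feas tmin]]; have [Fu hu] := (feasE u t).1 feas; split => // v Fv.
have /tmin : socp_feasible cs (col_mx v (norm2 (v - uref x))%:M) by apply/feasE; rewrite sct.
rewrite !obj sct => ht.
have hh := le_trans hu ht.
rewrite !Jn !expr2; by apply: ler_pM; rewrite ?norm2_ge0.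
Qed.

Unset Implicit Arguments.

Theorem theorem1 (R : realType) (n m N : nat) (X : set 'cV[R]_n)
  (ft : 'cV[R]_n -> 'cV[R]_n) (gt : 'cV[R]_n -> 'M[R]_(n, m))
  (B : 'cV[R]_n -> R) (gam : R -> R) (uref : 'cV[R]_n -> 'cV[R]_m)
  (k : 'I_(1 + m) -> 'cV[R]_n -> 'cV[R]_n -> R) (sn beta : R) :
  (forall x, X x -> differentiable B x) ->
  (forall v, {within X, continuous (fun y => 'd B y v)}) ->
  ext_classKinf gam ->
  (forall l, is_kernel (k l)) ->
  0 < sn -> 0 < beta ->
  forall (x : 'cV[R]_n), X x ->
  forall (xs : 'I_N -> 'cV[R]_n) (us : 'I_N -> 'cV[R]_m) (z : 'cV[R]_N),
  (forall j, X (xs j)) ->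
  posdef (SigmaB k xs us sn x) ->
  let J := fun u : 'cV[R]_m => sc ((u - uref x)^T *m (u - uref x)) in
  let F := [set u : 'cV[R]_m | 0 <= LieF B ft x + sc (LieG B gt x *m u)
              + muB k xs us z sn x u - beta * sigmaB k xs us sn x u
              + gam (B x)] in
  convex_function [set: 'cV[R]_m] J /\ convex_set F /\
  exists (q : nat) (cs : 'I_q -> soc_con R (m + 1)) (c : 'cV[R]_(m + 1)),
    (forall (u : 'cV[R]_m) (t : 'cV[R]_1),
       socp_feasible cs (col_mx u t) <-> F u /\ norm2 (u - uref x) <= sc t) /\
    (forall u : 'cV[R]_m, is_minimizer J F u <->
       exists t : 'cV[R]_1,
         is_minimizer (fun w => sc (c^T *m w)) (socp_feasible cs) (col_mx u t)).
Proof. exact: mainthm. Qed.
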